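(* Let $m\geq 1$ be an integer. For all integers $n\geq 1$ and all real $x\in(0,\pi)$, $$\sum_{\substack{k=0\\ k \text{ even}}}^n \binom{n-k+m}{m}\cos\bigl((k+1/2)x\bigr)>0 \qquad\text{and}\qquad \sum_{\substack{k=0\\ k \text{ even}}}^n \binom{n-k+m}{m}\sin\bigl((k+1/2)x\bigr)>0.$$ In both cases the lower bound $0$ is sharp. *)

(* Defs.v *)
From Stdlib Require Import Reals Arith.
Open Scope R_scope.

Definition S_cos (m n : nat) (x : R) : R :=
  sum_f_R0 (fun k => if Nat.even k
                     then C (n - k + m) m * cos ((INR k + 1/2) * x)
                     else 0) n.

Definition S_sin (m n : nat) (x : R) : R :=
  sum_f_R0 (fun k => if Nat.even k
                     then C (n - k + m) m * sin ((INR k + 1/2) * x)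
                     else 0) n.

(* Main.v *)
Require Import Defs.
From Stdlib Require Import Reals Arith.
From Stdlib Require Import Lia Lra.
Open Scope R_scope.

Lemma C_n0 n : C n 0 = 1.
Proof. unfold C. rewrite Nat.sub_0_r. simpl fact. rewrite Rmult_1_l.
  field. apply INR_fact_neq_0. Qed.

Lemma C_nn n : C n n = 1.
Proof. unfold C. rewrite Nat.sub_diag. simpl fact. rewrite Rmult_1_r.
  field. apply INR_fact_neq_0. Qed.

Lemma C_pos n k : 0 < C n k.
Proof. unfold C. apply Rdiv_lt_0_compat. apply INR_fact_lt_0.
  apply Rmult_lt_0_compat; apply INR_fact_lt_0. Qed.

Lemma S_sin_pascal m n x :
  S_sin (S m) (S n) x = S_sin (S m) n x + S_sin m (S n) x.
Proof.
  unfold S_sin. rewrite !tech5.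
  rewrite Nat.sub_diag, !Nat.add_0_l, !C_nn.
  rewrite <- Rplus_assoc. f_equal. rewrite <- sum_plus. apply sum_eq.
  intros k Hk. destruct (Nat.even k); [|ring].
  replace (S n - k + S m)%nat with (S (n - k + S m)) by lia.
  replace (S n - k + m)%nat with (n - k + S m)%nat by lia.
  rewrite <- pascal by lia. ring.
Qed.
Lemma S_cos_sin m n x : S_cos m n x = S_sin m n (PI - x).
Proof.
  unfold S_cos, S_sin. apply sum_eq. intros k Hk.
  destruct (Nat.even k) eqn:E; [|reflexivity].
  apply Nat.even_spec in E. destruct E as [j ->]. f_equal.
  rewrite <- sin_shift. rewrite <- (sin_period (PI/2 - _) j). f_equal.
  rewrite mult_INR. simpl INR. field.
Qed.


Lemma ps_ss a b : 2 * sin b * sin a = cos (a - b) - cos (a + b).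
Proof. rewrite cos_minus, cos_plus. ring. Qed.

Lemma ps_sc a b : 2 * sin b * cos a = sin (a + b) - sin (a - b).
Proof. rewrite sin_minus, sin_plus. ring. Qed.

Definition E0 x n := sum_f_R0 (fun k => if Nat.even k then sin ((INR k + 1/2) * x) else 0) n.

Lemma S0_E0 x n : S_sin 0 n x = E0 x n.
Proof. unfold S_sin, E0. apply sum_eq. intros k _. destruct (Nat.even k); [|reflexivity].
  rewrite C_n0. ring. Qed.

Lemma S0_even x N :
  2 * sin x * S_sin 0 (2 * N) x = cos (x/2) - cos ((4 * INR N + 3) * (x/2)).
Proof.
  rewrite S0_E0.
  induction N as [|N IH].
  - unfold E0. simpl.
    replace ((0 + 1/2)*x) with (x/2) by field.
    replace (sin x) with (sin (2*(x/2))) by (f_equal; field).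
    rewrite ps_ss. replace (x/2 - 2*(x/2)) with (-(x/2)) by field. rewrite cos_neg. f_equal; f_equal; field.
  - replace (2 * S N)%nat with (S (S (2 * N))) by lia.
    unfold E0 in *. rewrite !tech5.
    replace (Nat.even (S (2*N))) with false.
    2:{ replace (S (2*N)) with (2*N+1)%nat by lia. now rewrite Nat.even_odd. }
    replace (Nat.even (S (S (2*N)))) with true.
    2:{ replace (S (S (2*N))) with (2*(S N))%nat by lia. now rewrite Nat.even_even. }
    rewrite Rplus_0_r, Rmult_plus_distr_l, IH.
    replace (sin x) with (sin (2*(x/2))) by (f_equal; field).
    replace (INR (S (S (2 * N)))) with (2 * INR N + 2) by (rewrite !S_INR, mult_INR; simpl; ring).
    rewrite ps_ss. rewrite (S_INR N).
    replace ((2 * INR N + 2 + 1 / 2) * x - 2 * (x / 2)) with ((4 * INR N + 3) * (x / 2)) by field.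
    replace ((2 * INR N + 2 + 1 / 2) * x + 2 * (x / 2)) with ((4 * (INR N + 1) + 3) * (x / 2)) by field.
    ring.
Qed.

Lemma S0_odd x N : S_sin 0 (S (2 * N)) x = S_sin 0 (2 * N) x.
Proof.
  rewrite !S0_E0. unfold E0. rewrite tech5.
  replace (Nat.even (S (2*N))) with false. apply Rplus_0_r.
  replace (S (2*N)) with (2*N+1)%nat by lia. now rewrite Nat.even_odd.
Qed.

Definition H (x : R) (N : nat) : R :=
  4 * INR N * sin (x/2) * (cos (x/2))^2 + sin (x/2) - sin ((4 * INR N + 1) * (x/2)).

Lemma H0 x : H x 0 = 0.
Proof. unfold H. simpl. replace ((4 * 0 + 1) * (x / 2)) with (x/2) by ring. ring. Qed.

Lemma H_step x N :
  H x (S N) - H x N = 2 * sin x * (cos (x/2) - cos ((4 * INR N + 3) * (x/2))).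
Proof.
  unfold H. rewrite S_INR.
  replace (sin x) with (sin (2*(x/2))) by (f_equal; field).
  set (y := x/2).
  rewrite Rmult_minus_distr_l, ps_sc, ps_sc.
  replace (y + 2 * y) with (2 * y + y) by ring.
  replace (y - 2 * y) with (- y) by ring.
  replace ((4 * INR N + 3) * y + 2 * y) with ((4 * (INR N + 1) + 1) * y) by ring.
  replace ((4 * INR N + 3) * y - 2 * y) with ((4 * INR N + 1) * y) by ring.
  rewrite sin_neg, sin_plus, sin_2a, cos_2a_cos.
  ring.
Qed.

Lemma S1_0 x : S_sin 1 0 x = S_sin 0 0 x.
Proof. unfold S_sin. simpl. rewrite !C_nn. ring. Qed.

Lemma T_odd_of_even x N :
  2 * sin x * (2 * sin x) * S_sin 1 (2 * N) x = H x N + H x (S N) ->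
  2 * sin x * (2 * sin x) * S_sin 1 (S (2 * N)) x = 2 * H x (S N).
Proof.
  intro IH. rewrite S_sin_pascal, S0_odd, Rmult_plus_distr_l, IH.
  rewrite Rmult_assoc, S0_even.
  pose proof (H_step x N). lra.
Qed.

Lemma T_even x N :
  2 * sin x * (2 * sin x) * S_sin 1 (2 * N) x = H x N + H x (S N).
Proof.
  induction N as [|N IH].
  - simpl (2 * 0)%nat. rewrite S1_0, Rmult_assoc.
    pose proof (S0_even x 0) as E. simpl (2*0)%nat in E. rewrite E.
    pose proof (H_step x 0). rewrite H0 in *. lra.
  - replace (2 * S N)%nat with (S (S (2 * N))) by lia.
    rewrite S_sin_pascal, Rmult_plus_distr_l, (T_odd_of_even x N IH).
    rewrite Rmult_assoc.
    replace (S (S (2 * N))) with (2 * S N)%nat by lia.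
    rewrite S0_even.
    pose proof (H_step x (S N)). lra.
Qed.

Lemma sin_mult_bound k t : Rabs (sin (INR k * t)) <= INR k * Rabs (sin t).
Proof.
  induction k as [|k IH].
  - simpl. rewrite Rmult_0_l, sin_0, Rabs_R0. lra.
  - rewrite S_INR. replace ((INR k + 1) * t) with (INR k * t + t) by ring.
    rewrite sin_plus.
    pose proof (COS_bound t). pose proof (COS_bound (INR k * t)).
    assert (Rabs (sin (INR k * t) * cos t) <= Rabs (sin (INR k * t))).
    { rewrite Rabs_mult. pose proof (Rabs_pos (sin (INR k * t))).
      assert (Rabs (cos t) <= 1) by (apply Rabs_le; lra). nra. }
    assert (Rabs (cos (INR k * t) * sin t) <= Rabs (sin t)).
    { rewrite Rabs_mult. pose proof (Rabs_pos (sin t)).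
      assert (Rabs (cos (INR k * t)) <= 1) by (apply Rabs_le; lra). nra. }
    pose proof (Rabs_triang (sin (INR k * t) * cos t) (cos (INR k * t) * sin t)).
    lra.
Qed.

Lemma H_pos x N : 0 < x < PI -> 0 <= H x N /\ ((1 <= N)%nat -> 0 < H x N).
Proof.
  intros [Hx1 Hx2].
  set (y := x/2).
  assert (Hid : H x N = cos y * (INR (2*N) * sin (2*y) - sin (INR (2*N) * (2*y)))
                        + sin y * (1 - cos (INR (2*N) * (2 * y)))).
  { unfold H. fold y. rewrite mult_INR. simpl (INR 2).
    replace ((4 * INR N + 1) * y) with ((1+1) * INR N * (2 * y) + y) by ring.
    rewrite sin_plus, sin_2a. ring. }
  assert (Hy1 : 0 < y) by (unfold y; lra).
  assert (Hy2 : y < PI/2) by (unfold y; lra).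
  assert (cy : 0 < cos y) by (apply cos_gt_0; lra).
  assert (sy : 0 < sin y) by (apply sin_gt_0; lra).
  assert (s2y : 0 < sin (2*y)) by (apply sin_gt_0; lra).
  pose proof (sin_mult_bound (2*N) (2*y)) as B.
  rewrite (Rabs_right (sin (2*y))) in B by lra.
  set (s := sin (INR (2 * N) * (2 * y))) in *.
  set (c := cos (INR (2 * N) * (2 * y))) in *.
  assert (sc : s^2 + c^2 = 1).
  { pose proof (sin2_cos2 (INR (2 * N) * (2 * y))) as P. unfold Rsqr in *. fold s c in P. lra. }
  assert (c <= 1) by (pose proof (COS_bound (INR (2 * N) * (2 * y))) as P; fold c in P; lra).
  assert (s <= INR (2*N) * sin (2*y)) by (pose proof (Rle_abs s); lra).
  rewrite Hid. split.
  - assert (0 <= cos y * (INR (2 * N) * sin (2 * y) - s)) by (apply Rmult_le_pos; lra).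
    assert (0 <= sin y * (1 - c)) by (apply Rmult_le_pos; lra).
    lra.
  - intro HN.
    assert (0 < INR (2*N)) by (apply lt_0_INR; lia).
    assert (0 < INR (2 * N) * sin (2 * y)) by (apply Rmult_lt_0_compat; lra).
    destruct (Rlt_or_le c 1) as [Hc|Hc].
    + assert (0 <= cos y * (INR (2 * N) * sin (2 * y) - s)) by (apply Rmult_le_pos; lra).
      assert (0 < sin y * (1 - c)) by (apply Rmult_lt_0_compat; lra).
      lra.
    + assert (Ec : c = 1) by lra. assert (s = 0) by nra.
      assert (0 < cos y * (INR (2 * N) * sin (2 * y) - s)) by (apply Rmult_lt_0_compat; lra).
      assert (sin y * (1 - c) = 0) by (rewrite Ec; ring). lra.
Qed.

Lemma S1_pos x n : 0 < x < PI -> 0 < S_sin 1 n x.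
Proof.
  intros Hx. assert (0 < sin x) by (apply sin_gt_0; lra).
  assert (0 < 2 * sin x * (2 * sin x)) by nra.
  destruct (Nat.Even_or_Odd n) as [[N ->]|[N ->]].
  - pose proof (T_even x N). destruct (H_pos x N Hx) as [A _].
    destruct (H_pos x (S N) Hx) as [_ B]. specialize (B ltac:(lia)).
    assert (0 < 2 * sin x * (2 * sin x) * S_sin 1 (2 * N) x) by lra.
    destruct (Rlt_or_le 0 (S_sin 1 (2 * N) x)); [assumption|nra].
  - replace (2 * N + 1)%nat with (S (2 * N)) by lia.
    pose proof (T_odd_of_even x N (T_even x N)).
    destruct (H_pos x (S N) Hx) as [_ B]. specialize (B ltac:(lia)).
    assert (0 < 2 * sin x * (2 * sin x) * S_sin 1 (S (2 * N)) x) by lra.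
    destruct (Rlt_or_le 0 (S_sin 1 (S (2 * N)) x)); [assumption|nra].
Qed.

Lemma S_zero m x : S_sin m 0 x = C m m * sin ((INR 0 + 1/2) * x).
Proof. unfold S_sin. simpl. ring. Qed.

Lemma Sm_pos m x n : (1 <= m)%nat -> 0 < x < PI -> 0 < S_sin m n x.
Proof.
  intros Hm Hx. revert n. induction m as [|m IHm]; [lia|].
  destruct m as [|m]; [intro n; now apply S1_pos|].
  specialize (IHm ltac:(lia)). clear Hm. intro n.
  induction n as [|n IHn].
  - rewrite S_zero. apply Rmult_lt_0_compat; [apply C_pos|].
    apply sin_gt_0; simpl; lra.
  - rewrite S_sin_pascal. specialize (IHm (S n)). lra.
Qed.

Lemma S1_small m x : S_sin m 1 x = C (S m) m * sin ((INR 0 + 1/2) * x).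
Proof. unfold S_sin. simpl. ring. Qed.

Lemma sharp_sin m eps : 0 < eps ->
  exists x, 0 < x < PI /\ S_sin m 1 x < eps.
Proof.
  intros He. set (c := C (S m) m). assert (Hc : 0 < c) by apply C_pos.
  pose proof PI2_3_2.
  exists (eps / (c + eps)).
  assert (0 < eps / (c + eps)) by (apply Rdiv_lt_0_compat; lra).
  assert (eps / (c + eps) < 1).
  { apply (Rmult_lt_reg_r (c + eps)); [lra|]. unfold Rdiv. rewrite Rmult_assoc, Rinv_l by lra. lra. }
  split; [lra|].
  rewrite S1_small. fold c. simpl (INR 0). rewrite Rplus_0_l.
  set (z := eps / (c + eps)) in *.
  assert (sin (1/2 * z) < 1/2 * z) by (apply sin_lt_x; lra).
  assert (c * z < eps).
  { unfold z. unfold Rdiv. replace (c * (eps * / (c + eps))) with (eps * (c / (c + eps))) by (field; lra).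
    assert (c / (c + eps) < 1).
    { apply (Rmult_lt_reg_r (c + eps)); [lra|]. unfold Rdiv. rewrite Rmult_assoc, Rinv_l by lra. lra. }
    nra. }
  nra.
Qed.

Theorem theorem3 (m : nat) (Hm : (1 <= m)%nat) :
  (forall (n : nat) (x : R), (1 <= n)%nat -> 0 < x < PI ->
     0 < S_cos m n x /\ 0 < S_sin m n x) /\
  (forall eps : R, 0 < eps ->
     exists (n : nat) (x : R), (1 <= n)%nat /\ 0 < x < PI /\ S_cos m n x < eps) /\
  (forall eps : R, 0 < eps ->
     exists (n : nat) (x : R), (1 <= n)%nat /\ 0 < x < PI /\ S_sin m n x < eps).
Proof.
  split; [|split].
  - intros n x _ Hx. split.
    + rewrite S_cos_sin. apply Sm_pos; [assumption|lra].
    + apply Sm_pos; assumption.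
  - intros eps He. destruct (sharp_sin m eps He) as [x [Hx Hs]].
    exists 1%nat, (PI - x). split; [lia|]. split; [lra|].
    rewrite S_cos_sin. replace (PI - (PI - x)) with x by ring. exact Hs.
  - intros eps He. destruct (sharp_sin m eps He) as [x [Hx Hs]].
    exists 1%nat, x. auto.
Qed.
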